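(* Let $t\ne1$, $u\notin\{0,1,-1\}$ with $V_F(t,\omega(u))>0$, and assume $\mathfrak{g}_{t,u}\in\mathcal{E}(\mathcal{P}_{4,4})$. Then $\mathfrak{g}_{t,u}$ is irreducible in $\mathbb{C}[a,b,c,d]$ and $\mathfrak{g}_{t,u}\notin\Sigma_{4,4}$.
   Context: Variables $a,b,c,d$. Put $s_0=a^4+b^4+c^4+d^4-4abcd$; $s_1=T_{3,1}-12abcd$ with $T_{3,1}=\sum_{i\ne j}x_i^3x_j$; $s_2=\sum_{i<j}x_i^2x_j^2-6abcd$; $s_3=T_{2,1,1}-12abcd$ with $T_{2,1,1}=\sum_i x_i^2\sum_{j<k,\ j,k\ne i}x_jx_k$; $s_4=abcd$ (here $(x_1,x_2,x_3,x_4)=(a,b,c,d)$). Let $\omega(u)=u+\frac1u-2$ and $p^G_0(t,w)=(4t+2)w^2-3(t-1)^2w$, $p^G_1(t,w)=-2(t+1)^2w^2+2(t+1)(t-1)^2w$, $p^G_2(t,w)=4t^2w^2-2(t-1)^2(2t-1)w+2(t-1)^4$, $p^G_3(t,w)=2(t+1)^2w^2-(t-1)^2(t^2+3)w-2(t-1)^4$, $p^G_4(t,w)=2(t-1)^4w^2$, and for $u\ne0$, $\mathfrak{g}_{t,u}=u^2\sum_{i=0}^4p^G_i(t,\omega(u))s_i$. Let $V_F(t,w)=(3+6t-t^2)w^2-6(t-1)^2w$. $\mathcal{P}_{4,4}$ is the cone of real quartic forms in $a,b,c,d$ nonnegative on $\mathbb{R}^4$, $\Sigma_{4,4}$ the cone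 of sums of squares of real quadratic forms; $f\in\mathcal{P}_{4,4}\setminus\{0\}$ is extremal ($f\in\mathcal{E}(\mathcal{P}_{4,4})$) if $f=g+h$ with $g,h\in\mathcal{P}_{4,4}$ forces $g,h\in\mathbb{R}_{\ge0}f$. *)

(* Defs.v *)
From HB Require Import structures.
From mathcomp Require Import all_boot all_order all_algebra.
From mathcomp Require Import reals.
From mathcomp Require Import complex.
From mathcomp Require Import mpoly.

Set Implicit Arguments.
Unset Strict Implicit.
Unset Printing Implicit Defensive.

Import Order.TTheory GRing.Theory Num.Theory.
Local Open Scope ring_scope.

Section Forms.
Variable R : realType.

Notation P := {mpoly R[4]}.

(* the variables (x_0,x_1,x_2,x_3) = (a,b,c,d) are 'X_0,...,'X_3 *)
Definition abcd : P := \prod_(i < 4) 'X_i.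

Definition T31 : P := \sum_(i < 4) \sum_(j < 4 | j != i) 'X_i ^+ 3 * 'X_j.

Definition S22 : P := \sum_(i < 4) \sum_(j < 4 | (i < j)%N) 'X_i ^+ 2 * 'X_j ^+ 2.

Definition T211 : P :=
  \sum_(i < 4) ('X_i ^+ 2 *
     \sum_(j < 4) \sum_(k < 4 | [&& (j < k)%N, j != i & k != i]) 'X_j * 'X_k).

Definition s0 : P := \sum_(i < 4) 'X_i ^+ 4 - 4%:R * abcd.
Definition s1 : P := T31 - 12%:R * abcd.
Definition s2 : P := S22 - 6%:R * abcd.
Definition s3 : P := T211 - 12%:R * abcd.
Definition s4 : P := abcd.

Definition omega (u : R) : R := u + u^-1 - 2%:R.

Definition pG0 (t w : R) : R := (4%:R * t + 2%:R) * w ^+ 2 - 3%:R * (t - 1) ^+ 2 * w.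
Definition pG1 (t w : R) : R :=
  - 2%:R * (t + 1) ^+ 2 * w ^+ 2 + 2%:R * (t + 1) * (t - 1) ^+ 2 * w.
Definition pG2 (t w : R) : R :=
  4%:R * t ^+ 2 * w ^+ 2 - 2%:R * (t - 1) ^+ 2 * (2%:R * t - 1) * w
  + 2%:R * (t - 1) ^+ 4.
Definition pG3 (t w : R) : R :=
  2%:R * (t + 1) ^+ 2 * w ^+ 2 - (t - 1) ^+ 2 * (t ^+ 2 + 3%:R) * w
  - 2%:R * (t - 1) ^+ 4.
Definition pG4 (t w : R) : R := 2%:R * (t - 1) ^+ 4 * w ^+ 2.

Definition gform (t u : R) : P :=
  let w := omega u in
  u ^+ 2 *: (pG0 t w *: s0 + pG1 t w *: s1 + pG2 t w *: s2
             + pG3 t w *: s3 + pG4 t w *: s4).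

Definition VF (t w : R) : R :=
  (3%:R + 6%:R * t - t ^+ 2) * w ^+ 2 - 6%:R * (t - 1) ^+ 2 * w.

Definition P44 (f : P) : Prop :=
  f \is 4.-homog /\ forall x : 'I_4 -> R, 0 <= f.@[x].

Definition Sigma44 (f : P) : Prop :=
  exists qs : seq P, all (fun q : P => q \is 2.-homog) qs /\
                     f = \sum_(q <- qs) q ^+ 2.

Definition extremalP44 (f : P) : Prop :=
  [/\ P44 f, f != 0 &
      forall g h : P, P44 g -> P44 h -> f = g + h ->
        (exists2 l : R, 0 <= l & g = l *: f) /\
        (exists2 l : R, 0 <= l & h = l *: f)].

Definition toC (f : P) : {mpoly (complex R)[4]} :=
  map_mpoly (real_complex R) f.

End Forms.

Definition mpoly_irreducible (K : idomainType) (n : nat) (f : {mpoly K[n]}) : Prop :=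
  [/\ f != 0, f \isn't a GRing.unit &
      forall g h : {mpoly K[n]}, f = g * h -> g \is a GRing.unit \/ h \is a GRing.unit].

(* Main.v *)
Require Import Defs.
From HB Require Import structures.
From mathcomp Require Import all_boot all_order all_algebra.
From mathcomp Require Import reals.
From mathcomp Require Import complex.
From mathcomp Require Import mpoly.
From mathcomp Require Import ring lra zify.
Import Order.TTheory GRing.Theory Num.Theory.
Local Open Scope complex_scope.
Local Open Scope ring_scope.

Section Gen.
Variable K : fieldType.

Fact lineK_key : unit. Proof. exact: tt. Qed.
Definition lineK_def (P : {mpoly K[4]}) (p v : 'I_4 -> K) : {poly K} :=
  (map_mpoly (@polyC K) P).@[fun i => (p i)%:P + v i *: 'X].
Definition lineK := locked_with lineK_key lineK_def.
Lemma lineKE P p v : lineK P p v = (map_mpoly (@polyC K) P).@[fun i => (p i)%:P + v i *: 'X].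
Proof. by rewrite /lineK unlock. Qed.

Lemma lineM P Q p v : lineK (P * Q) p v = lineK P p v * lineK Q p v.
Proof. by rewrite !lineKE rmorphM /= mevalM. Qed.

Lemma lineD P Q p v : lineK (P + Q) p v = lineK P p v + lineK Q p v.
Proof. by rewrite !lineKE rmorphD /= mevalD. Qed.

Lemma lineC c p v : lineK c%:MP p v = c%:P.
Proof. by rewrite !lineKE map_mpolyC mevalC. Qed.

Lemma lineX i p v : lineK 'X_i p v = (p i)%:P + v i *: 'X.
Proof. by rewrite !lineKE map_mpolyX mevalXU. Qed.

Lemma meval_rmorph (A B : comNzRingType) (f : {rmorphism A -> B}) (P : {mpoly A[4]}) x :
  f (P.@[x]) = (map_mpoly f P).@[fun i => f (x i)].
Proof.
elim/mpolyind: P => [|c m P _ _ IH].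
  have h0 : forall (C : comNzRingType) (y : _ -> C), (0 : {mpoly C[4]}).@[y] = 0 by move=> C y; exact: meval0.
  by rewrite /meval /map_mpoly !mmap0 rmorph0.
rewrite mevalD mevalZ mevalX rmorphD rmorphM /= IH raddfD /= map_mpolyZ map_mpolyX.
rewrite mevalD mevalZ mevalX rmorph_prod; congr (_ * _ + _).
by apply: eq_bigr => i _; rewrite rmorphXn.
Qed.

Lemma line_horner P p v r :
  (lineK P p v).[r] = P.@[fun i => p i + r * v i].
Proof.
rewrite !lineKE -horner_evalE meval_rmorph.
have -> : map_mpoly (horner_eval r) (map_mpoly (@polyC K) P) = P.
  by apply/mpolyP => m; rewrite !mcoeff_map_mpoly /= horner_evalE hornerC.
by apply: meval_eq => i /=; rewrite horner_evalE hornerD hornerZ hornerC hornerX mulrC.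
Qed.


Lemma line_coef0 P p v : (lineK P p v)`_0 = P.@[p].
Proof.
by rewrite -horner_coef0 line_horner; apply: meval_eq => i; rewrite mul0r addr0.
Qed.

Definition Ad (p : 'I_4 -> K) (P : {mpoly K[4]}) := forall v w,
  (lineK P p (fun i => v i + w i))`_1 = (lineK P p v)`_1 + (lineK P p w)`_1.

Lemma coefM1 (a b : {poly K}) : (a * b)`_1 = a`_0 * b`_1 + a`_1 * b`_0.
Proof. by rewrite coefM !big_ord_recr big_ord0 /= add0r. Qed.

Lemma AdD p P Q : Ad p P -> Ad p Q -> Ad p (P + Q).
Proof. by move=> hP hQ v w; rewrite !lineD !coefD (congr2 +%R (hP v w) (hQ v w)) addrACA. Qed.

Lemma AdM p P Q : Ad p P -> Ad p Q -> Ad p (P * Q).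
Proof.
move=> hP hQ v w; rewrite !lineM !coefM1 !line_coef0.
transitivity (P.@[p] * ((lineK Q p v)`_1 + (lineK Q p w)`_1) +
   ((lineK P p v)`_1 + (lineK P p w)`_1) * Q.@[p]).
  by congr (_ * _ + _ * _); [exact: hQ | exact: hP].
by rewrite mulrDr mulrDl addrACA.
Qed.

Lemma AdC p c : Ad p c%:MP.
Proof. by move=> v w; rewrite !lineC !coefC /= addr0. Qed.

Lemma AdX p i : Ad p 'X_i.
Proof. by move=> v w; rewrite !lineX !coefD !coefC !coefZ !coefX /= !add0r !mulr1. Qed.

Lemma Ad_all p P : Ad p P.
Proof.
rewrite [P]mpolyE; apply: (big_ind (Ad p)).
- by rewrite -mpolyC0; exact: AdC.
- exact: AdD.
move=> m _; rewrite -mul_mpolyC; apply: AdM; first exact: AdC.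
rewrite mpolyXE_id; apply: (big_ind (Ad p)).
- by rewrite -mpolyC1; exact: AdC.
- exact: AdM.
move=> i _; elim: (m i) => [|k IH]; first by rewrite expr0 -mpolyC1; exact: AdC.
by rewrite exprS; apply: AdM => //; exact: AdX.
Qed.

Lemma line_size P p v : (size (lineK P p v) <= msize P)%N.
Proof.
rewrite {1}[P]mpolyE.
have : {in msupp P, forall m, (mdeg m < msize P)%N} by move=> m; exact: msize_mdeg_lt.
elim: (msupp P) => [|m s IH] Hs.
  by rewrite big_nil lineC size_polyC eqxx.
rewrite big_cons lineD (leq_trans (size_polyD _ _)) // geq_max.
rewrite IH ?andbT; last by move=> x xs; apply: Hs; rewrite inE xs orbT.
rewrite -mul_mpolyC lineM lineC (leq_trans (size_polyMleq _ _)) //.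
have hm := Hs m (mem_head _ _).
have : (size (lineK 'X_[m] p v) <= (mdeg m).+1)%N.
  rewrite mpolyXE_id mdegE.
  apply: (big_ind2 (fun (a : {mpoly K[4]}) (b : nat) => (size (lineK a p v) <= b.+1)%N)).
  - by rewrite -mpolyC1 lineC size_polyC; case: (_ != _).
  - move=> a1 b1 a2 b2 h1 h2; rewrite lineM (leq_trans (size_polyMleq _ _)) //.
    by lia.
  move=> i _; elim: (m i) => [|k IH2].
    by rewrite expr0 -mpolyC1 lineC size_polyC; case: (_ != _).
  rewrite exprS lineM (leq_trans (size_polyMleq _ _)) //.
  rewrite lineX.
  have h2 : (size ((p i)%:P + v i *: 'X)%R <= 2)%N.
    rewrite (leq_trans (size_polyD _ _)) // geq_max (leq_trans (size_polyC_leq1 _)) //=.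
    by rewrite (leq_trans (size_scale_leq _ _)) // size_polyX.
  by lia.
move=> hX; have hc := size_polyC_leq1 (P@_m); apply: (leq_trans _ hm); move: hc hX; set a := size _; set b := size _; move=> hc hX; lia.
Qed.

Definition alpha (a b : K) : nat := if a == 0 then (if b == 0 then 1 else 2) else 0.

Lemma alpha_le2 a b : (alpha a b <= 2)%N.
Proof. by rewrite /alpha; case: (a == 0); case: (b == 0). Qed.

Lemma type_div {g h : {poly K}} {r : K} :
  ('X - r%:P) ^+ 2 %| g * h ->
  ('X - r%:P) ^+ (alpha g.[r] h.[r]) %| g /\ ('X - r%:P) ^+ (2 - alpha g.[r] h.[r]) %| h.
Proof.
move=> hd; rewrite /alpha.
have [g0|g0] := eqVneq g.[r] 0; [have [h0|h0] := eqVneq h.[r] 0|].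
- by rewrite !expr1 !dvdp_XsubCl /root g0 h0.
- split; last by rewrite expr0 dvd1p.
  have hc : coprimep ('X - r%:P) h by rewrite coprimep_sym coprimep_XsubC rootE.
  by rewrite -(Gauss_dvdpl _ (coprimep_expl 2 hc)).
- split; first by rewrite expr0 dvd1p.
  have hc : coprimep ('X - r%:P) g by rewrite coprimep_sym coprimep_XsubC rootE.
  by rewrite -(Gauss_dvdpr _ (coprimep_expl 2 hc)).
Qed.


Lemma size_two_roots {g : {poly K}} {a b : nat} :
  g != 0 -> ('X - 0%:P) ^+ a %| g -> ('X - 1%:P) ^+ b %| g -> (a + b + 1 <= size g)%N.
Proof.
move=> g0 ha hb.
have cop : coprimep (('X - 0%:P) ^+ a : {poly K}) (('X - 1%:P) ^+ b).
  apply: (coprimep_expl a); apply: (coprimep_expr b); apply: coprimep_XsubC2.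
  by rewrite subr0 oner_eq0.
have hd : ('X - 0%:P) ^+ a * ('X - 1%:P) ^+ b %| g by rewrite Gauss_dvdp // ha hb.
have := dvdp_leq g0 hd.
rewrite size_mul ?expf_neq0 ?polyXsubC_eq0 // !size_exp_XsubC.
by rewrite addSn addnS /= addn1.
Qed.

Lemma line_pair {G H : {mpoly K[4]}} {p q : 'I_4 -> K} {c : K} :
  c != 0 -> lineK (G * H) p (fun i => q i - p i) = c *: ('X ^+ 2 * ('X - 1) ^+ 2) ->
  (alpha G.@[p] H.@[p] + alpha G.@[q] H.@[q] + 1 <= msize G)%N /\
  ((2 - alpha G.@[p] H.@[p]) + (2 - alpha G.@[q] H.@[q]) + 1 <= msize H)%N.
Proof.
move=> c0; rewrite lineM.
set g := lineK G p _; set h := lineK H p _ => E.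
have e0 : forall P, (lineK P p (fun i => q i - p i)).[0] = P.@[p].
  by move=> P; rewrite line_horner; apply: meval_eq => i; rewrite mul0r addr0.
have e1 : forall P, (lineK P p (fun i => q i - p i)).[1] = P.@[q].
  by move=> P; rewrite line_horner; apply: meval_eq => i; rewrite mul1r addrC subrK.
have d0 : ('X - 0%:P) ^+ 2 %| g * h.
  by rewrite E dvdpZr // subr0 dvdp_mulr.
have d1 : ('X - 1%:P) ^+ 2 %| g * h.
  by rewrite E dvdpZr // polyC1 dvdp_mull.
have [ga ha] := type_div d0; have [gb hb] := type_div d1.
have eg0 : g.[0] = G.@[p] by rewrite /g e0.
have eh0 : h.[0] = H.@[p] by rewrite /h e0.
have eg1 : g.[1] = G.@[q] by rewrite /g e1.
have eh1 : h.[1] = H.@[q] by rewrite /h e1.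
rewrite eg0 eh0 in ga ha; rewrite eg1 eh1 in gb hb.
have gh0 : g * h != 0.
  by rewrite E scaler_eq0 negb_or c0 mulf_neq0 // expf_neq0 // ?polyX_eq0 // -polyC1 polyXsubC_eq0.
have gn : g != 0 by apply: contraNneq gh0 => ->; rewrite mul0r.
have hn : h != 0 by apply: contraNneq gh0 => ->; rewrite mulr0.
split.
- exact: leq_trans (size_two_roots gn ga gb) (line_size _ _ _).
- exact: leq_trans (size_two_roots hn ha hb) (line_size _ _ _).
Qed.

Lemma nonunit_msize {G : {mpoly K[4]}} : G != 0 -> ~~ (G \is a GRing.unit) -> (2 <= msize G)%N.
Proof.
move=> G0 GU; rewrite leqNgt ltnS; apply/negP => hs.
move/negP: GU; apply; rewrite (msize1_polyC hs).
have c0 : G@_0 != 0.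
  by apply: contra G0 => /eqP c0; rewrite (msize1_polyC hs) c0.
apply/unitrP; exists (G@_0)^-1%:MP.
by rewrite -!mpolyCM mulVf ?mulfV.
Qed.

Lemma no_factor (G H : {mpoly K[4]}) (p1 p2 p3 : 'I_4 -> K) (c12 c13 c23 : K) :
  (msize (G * H) <= 5)%N -> G * H != 0 ->
  ~~ (G \is a GRing.unit) -> ~~ (H \is a GRing.unit) ->
  alpha G.@[p1] H.@[p1] != 1%N ->
  c12 != 0 -> lineK (G * H) p1 (fun i => p2 i - p1 i) = c12 *: ('X ^+ 2 * ('X - 1) ^+ 2) ->
  c13 != 0 -> lineK (G * H) p1 (fun i => p3 i - p1 i) = c13 *: ('X ^+ 2 * ('X - 1) ^+ 2) ->
  c23 != 0 -> lineK (G * H) p2 (fun i => p3 i - p2 i) = c23 *: ('X ^+ 2 * ('X - 1) ^+ 2) ->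
  False.
Proof.
move=> hs gh0 gu hu a1 c12n l12 c13n l13 c23n l23.
have G0 : G != 0 by apply: contraNneq gh0 => ->; rewrite mul0r.
have H0 : H != 0 by apply: contraNneq gh0 => ->; rewrite mulr0.
have sG := nonunit_msize G0 gu; have sH := nonunit_msize H0 hu.
rewrite msizeM // in hs.
have [x1 y1] := line_pair c12n l12.
have [x2 y2] := line_pair c13n l13.
have [x3 y3] := line_pair c23n l23.
have b1 := alpha_le2 G.@[p1] H.@[p1].
have b2 := alpha_le2 G.@[p2] H.@[p2].
have b3 := alpha_le2 G.@[p3] H.@[p3].
move: a1 b1 b2 b3 x1 y1 x2 y2 x3 y3 hs sG sH.
move: (alpha G.@[p1] H.@[p1]) (alpha G.@[p2] H.@[p2]) (alpha G.@[p3] H.@[p3]) (msize G) (msize H).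
move=> a b c m n; lia.
Qed.

Lemma coefM2 (a b : {poly K}) : (a * b)`_2 = a`_0 * b`_2 + a`_1 * b`_1 + a`_2 * b`_0.
Proof. by rewrite coefM !big_ord_recr big_ord0 /= add0r. Qed.

Lemma caseB (G H : {mpoly K[4]}) p (v1 v2 v3 : 'I_4 -> K) (Q1 Q2 Q3 : K) :
  (2%:R : K) != 0 -> G.@[p] = 0 -> H.@[p] = 0 -> Q1 * Q2 * Q3 != 0 ->
  (lineK (G * H) p v1)`_2 = Q1 -> (lineK (G * H) p v2)`_2 = Q2 ->
  (lineK (G * H) p v3)`_2 = Q3 ->
  (lineK (G * H) p (fun i => v1 i + v2 i))`_2 = Q1 + Q2 ->
  (lineK (G * H) p (fun i => v1 i + v3 i))`_2 = Q1 + Q3 ->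
  (lineK (G * H) p (fun i => v2 i + v3 i))`_2 = Q2 + Q3 -> False.
Proof.
move=> two Gp Hp QQ e1 e2 e3 e12 e13 e23.
have key : forall v, (lineK (G * H) p v)`_2 = (lineK G p v)`_1 * (lineK H p v)`_1.
  move=> v; rewrite lineM coefM2 (line_coef0 G p v) (line_coef0 H p v) Gp Hp.
  by rewrite !mul0r mulr0 add0r addr0.
rewrite key in e1; rewrite key in e2; rewrite key in e3.
rewrite key (Ad_all p G v1 v2) (Ad_all p H v1 v2) in e12.
rewrite key (Ad_all p G v1 v3) (Ad_all p H v1 v3) in e13.
rewrite key (Ad_all p G v2 v3) (Ad_all p H v2 v3) in e23.
move: e1 e2 e3 e12 e13 e23.
move: ((lineK G p v1)`_1) ((lineK G p v2)`_1) ((lineK G p v3)`_1).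
move: ((lineK H p v1)`_1) ((lineK H p v2)`_1) ((lineK H p v3)`_1).
move=> b1 b2 b3 a1 a2 a3 e1 e2 e3 e12 e13 e23.
have f12 : a2 * b1 = - (a1 * b2).
  have h : a2 * b1 = (a1 + a2) * (b1 + b2) - a1 * b1 - a2 * b2 - a1 * b2 by ring.
  by rewrite h e12 -e1 -e2; ring.
have f13 : a3 * b1 = - (a1 * b3).
  have h : a3 * b1 = (a1 + a3) * (b1 + b3) - a1 * b1 - a3 * b3 - a1 * b3 by ring.
  by rewrite h e13 -e1 -e3; ring.
have f23 : a3 * b2 = - (a2 * b3).
  have h : a3 * b2 = (a2 + a3) * (b2 + b3) - a2 * b2 - a3 * b3 - a2 * b3 by ring.
  by rewrite h e23 -e2 -e3; ring.
move/negP: QQ; apply; apply/eqP.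
have : 2%:R * (Q1 * Q2 * Q3) = 0.
  rewrite -e1 -e2 -e3.
  transitivity ((a1 * b2) * (a2 * b3) * (a3 * b1) + (a2 * b1) * (a3 * b2) * (a1 * b3)); first by ring.
  by rewrite f12 f13 f23; ring.
by move/eqP; rewrite mulf_eq0 (negbTE two) => /eqP.
Qed.
End Gen.
Arguments lineK {K}.

Section Conc.
Variable R : realType.
Definition X4 (a b c d : R) : 'I_4 -> R := fun i => nth 0 [:: a; b; c; d] i.

Ltac evtac := rewrite ?big_ord_recr ?big_ord0 /=;
  do 3 (rewrite ?(raddfD, raddf0, raddfB) /=; rewrite ?(mevalM, rmorphXn, mevalXU, mevalZ) /=);
  rewrite /X4 /=; ring.

Lemma abcdE a b c d : (abcd R).@[X4 a b c d] = a * b * c * d.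
Proof. rewrite /abcd rmorph_prod /= ?big_ord_recr ?big_ord0 /= ?mevalXU /X4 /=. by rewrite mul1r. Qed.

Lemma T31E a b c d : (T31 R).@[X4 a b c d] =
  a^+3*(b+c+d) + b^+3*(a+c+d) + c^+3*(a+b+d) + d^+3*(a+b+c).
Proof. rewrite /T31; under eq_bigr do rewrite big_mkcond; evtac. Qed.

Lemma S22E a b c d : (S22 R).@[X4 a b c d] =
  a^+2*b^+2 + a^+2*c^+2 + a^+2*d^+2 + b^+2*c^+2 + b^+2*d^+2 + c^+2*d^+2.
Proof. rewrite /S22; under eq_bigr do rewrite big_mkcond; evtac. Qed.

Lemma T211E a b c d : (T211 R).@[X4 a b c d] =
  a^+2*(b*c+b*d+c*d) + b^+2*(a*c+a*d+c*d) + c^+2*(a*b+a*d+b*d) + d^+2*(a*b+a*c+b*c).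
Proof.
rewrite /T211; under eq_bigr do under eq_bigr do rewrite big_mkcond.
evtac.
Qed.

Definition gv (t u a b c d : R) : R :=
  let w := omega u in
  let p := a * b * c * d in
  u ^+ 2 * (pG0 t w * (a^+4 + b^+4 + c^+4 + d^+4 - 4%:R * p)
   + pG1 t w * (a^+3*(b+c+d) + b^+3*(a+c+d) + c^+3*(a+b+d) + d^+3*(a+b+c) - 12%:R * p)
   + pG2 t w * (a^+2*b^+2 + a^+2*c^+2 + a^+2*d^+2 + b^+2*c^+2 + b^+2*d^+2 + c^+2*d^+2 - 6%:R * p)
   + pG3 t w * (a^+2*(b*c+b*d+c*d) + b^+2*(a*c+a*d+c*d) + c^+2*(a*b+a*d+b*d) + d^+2*(a*b+a*c+b*c) - 12%:R * p)
   + pG4 t w * p).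

Lemma natE (k : nat) (x : 'I_4 -> R) : (k%:R : {mpoly R[4]}).@[x] = k%:R.
Proof. by rewrite raddfMn /= meval1. Qed.

Lemma gE (t u a b c d : R) : (gform t u).@[X4 a b c d] = gv t u a b c d.
Proof.
rewrite /gform /gv /s0 /s1 /s2 /s3 /s4 /=.
do 3 (rewrite ?(mevalZ, raddfD, raddfB, raddfN) /=). rewrite ?mevalM /= !natE abcdE T31E S22E T211E.
have -> : (\sum_(i < 4) 'X_i ^+ 4 : {mpoly R[4]}).@[X4 a b c d] = a^+4 + b^+4 + c^+4 + d^+4.
  evtac.
ring.
Qed.

Definition cL (t u : R) : R := 2%:R * u ^+ 2 * (u - 1) ^+ 4 * (2%:R * (t + 1) * omega u - (t - 1) ^+ 2) ^+ 2.

Lemma L12 (t u s : R) : u != 0 ->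
  gv t u 1 (1 + s * (u - 1)) (u + s * (1 - u)) u = cL t u * (s ^+ 2 * (s - 1) ^+ 2).
Proof.
move=> u0; rewrite /gv /cL /pG0 /pG1 /pG2 /pG3 /pG4 /omega.
by field.
Qed.

Definition Pp t u a b c d := gv t u (1 + a) (1 + b) (u + c) (u + d).
Definition Pm t u a b c d := gv t u (1 - a) (1 - b) (u - c) (u - d).
Definition Qf t u a b c d := (Pp t u a b c d + Pm t u a b c d) / 2%:R - gv t u a b c d.
Definition Cf t u a b c d := (Pp t u a b c d - Pm t u a b c d) / 2%:R.

Lemma hessid (t u a b c d s : R) : u != 0 ->
  gv t u (1 + s * a) (1 + s * b) (u + s * c) (u + s * d) =
  Qf t u a b c d * s ^+ 2 + Cf t u a b c d * s ^+ 3 + gv t u a b c d * s ^+ 4.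
Proof.
move=> u0; rewrite /Qf /Cf /Pp /Pm /gv /pG0 /pG1 /pG2 /pG3 /pG4 /omega.
by field.
Qed.

Lemma X4eval (P : {mpoly R[4]}) (p v : 'I_4 -> R) a b c d a' b' c' d' s :
  p =1 X4 a b c d -> v =1 X4 a' b' c' d' ->
  P.@[fun i => p i + s * v i] = P.@[X4 (a + s * a') (b + s * b') (c + s * c') (d + s * d')].
Proof.
move=> hp hv; apply: meval_eq => i; rewrite hp hv.
by case: i => [[|[|[|[|k]]]] hk].
Qed.

Lemma interp (P : {mpoly R[4]}) (p v : 'I_4 -> R) (q : {poly R}) :
  (msize P <= 5)%N -> (size q <= 5)%N ->
  (forall s, P.@[fun i => p i + s * v i] = q.[s]) -> lineK P p v = q.
Proof.
move=> hP hq hv; apply/eqP; rewrite -subr_eq0; apply/eqP.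
apply: (@roots_geq_poly_eq0 _ _ [seq k%:R | k <- iota 0 5]).
- apply/allP => x /mapP [k _ ->].
  by rewrite rootE hornerD hornerN line_horner hv subrr.
- rewrite map_inj_uniq ?iota_uniq // => m n /eqP; rewrite eqr_nat => /eqP.
  done.
rewrite size_map size_iota (leq_trans (size_polyD _ _)) // geq_max size_polyN hq.
by rewrite (leq_trans (line_size _ _ _ _)).
Qed.

Lemma sz_mon (x : R) k : (size (x *: 'X^k) <= k.+1)%N.
Proof. by rewrite (leq_trans (size_scale_leq _ _)) // size_polyXn. Qed.

Lemma sz3 (x y z : {poly R}) : (size x <= 5)%N -> (size y <= 5)%N -> (size z <= 5)%N ->
  (size (x + y + z)%R <= 5)%N.
Proof.
move=> hx hy hz; have h1 := size_polyD x y; have h2 := size_polyD (x + y) z; lia.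
Qed.

Lemma line_hess (t u : R) (v : 'I_4 -> R) a b c d :
  u != 0 -> (msize (gform t u) <= 5)%N -> v =1 X4 a b c d ->
  (lineK (gform t u) (X4 1 1 u u) v)`_2 = Qf t u a b c d.
Proof.
move=> u0 hs hv.
rewrite (@interp _ _ _ (Qf t u a b c d *: 'X^2 + Cf t u a b c d *: 'X^3 + gv t u a b c d *: 'X^4) hs).
- by rewrite !coefD !coefZ !coefXn /= mulr1 !mulr0 !addr0.
- by apply: sz3; apply: leq_trans (sz_mon _ _) _.
move=> s; rewrite (@X4eval _ _ _ 1 1 u u a b c d s (fun i => erefl) hv) gE hessid //.
by rewrite !hornerE; ring.
Qed.

Definition VFw (t u : R) := VF t (omega u).

Lemma Q1E t u : u != 0 -> Qf t u 1 (-1) 0 0 = 2%:R * VFw t u * u ^+ 2 * ((t + 1) * u - 2%:R) ^+ 2.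
Proof. move=> u0; rewrite /Qf /Pp /Pm /VFw /VF /gv /pG0 /pG1 /pG2 /pG3 /pG4 /omega; by field. Qed.
Lemma Q2E t u : u != 0 -> Qf t u 0 0 1 (-1) = 2%:R * VFw t u * u ^+ 2 * (2%:R * u - (t + 1)) ^+ 2.
Proof. move=> u0; rewrite /Qf /Pp /Pm /VFw /VF /gv /pG0 /pG1 /pG2 /pG3 /pG4 /omega; by field. Qed.
Lemma Q3E t u : u != 0 -> Qf t u 1 1 0 0 = 2%:R * u ^+ 2 * (t - 1) ^+ 4 * (1 - u ^+ 2) ^+ 2.
Proof. move=> u0; rewrite /Qf /Pp /Pm /gv /pG0 /pG1 /pG2 /pG3 /pG4 /omega; by field. Qed.
Lemma Q12E t u : u != 0 -> Qf t u 1 (-1) 1 (-1) = Qf t u 1 (-1) 0 0 + Qf t u 0 0 1 (-1).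
Proof. move=> u0; rewrite /Qf /Pp /Pm /gv /pG0 /pG1 /pG2 /pG3 /pG4 /omega; by field. Qed.
Lemma Q13E t u : u != 0 -> Qf t u 2%:R 0 0 0 = Qf t u 1 (-1) 0 0 + Qf t u 1 1 0 0.
Proof. move=> u0; rewrite /Qf /Pp /Pm /gv /pG0 /pG1 /pG2 /pG3 /pG4 /omega; by field. Qed.
Lemma Q23E t u : u != 0 -> Qf t u 1 1 1 (-1) = Qf t u 0 0 1 (-1) + Qf t u 1 1 0 0.
Proof. move=> u0; rewrite /Qf /Pp /Pm /gv /pG0 /pG1 /pG2 /pG3 /pG4 /omega; by field. Qed.

Lemma zero_p1 t u : u != 0 -> gv t u 1 1 u u = 0.
Proof. move=> u0; rewrite /gv /pG0 /pG1 /pG2 /pG3 /pG4 /omega; by field. Qed.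

Lemma QQ_neq0 t u : t != 1 -> u != 0 -> u != 1 -> u != -1 -> 0 < VFw t u ->
  Qf t u 1 (-1) 0 0 * Qf t u 0 0 1 (-1) * Qf t u 1 1 0 0 != 0.
Proof.
move=> t1 u0 u1 um1 hV.
rewrite Q1E // Q2E // Q3E //.
have V0 : VFw t u != 0 by rewrite gt_eqF.
have e1 : (t + 1) * u - 2%:R != 0.
  apply/eqP => e.
  have te : t = 2%:R / u - 1.
    by apply/eqP; rewrite -subr_eq0; apply/eqP; rewrite -[LHS](mulfK u0); rewrite -[X in _ = X](mul0r u^-1) -e; field.
  have : VFw t u = - (4%:R * ((u - 1) ^+ 2 * (u + 1) / u ^+ 2) ^+ 2).
    by rewrite /VFw /VF /omega te; field.
  have := sqr_ge0 ((u - 1) ^+ 2 * (u + 1) / u ^+ 2); lra.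
have e2 : 2%:R * u - (t + 1) != 0.
  apply/eqP => e.
  have te : t = 2%:R * u - 1 by apply/eqP; rewrite -subr_eq0; apply/eqP; rewrite -[RHS]oppr0 -e; ring.
  have : VFw t u = - (4%:R * ((u - 1) ^+ 2 * (u + 1) / u) ^+ 2).
    by rewrite /VFw /VF /omega te; field.
  have := sqr_ge0 ((u - 1) ^+ 2 * (u + 1) / u); lra.
have e3 : 1 - u ^+ 2 != 0.
  have -> : 1 - u ^+ 2 = (1 - u) * (u + 1) by ring.
  rewrite mulf_neq0 //; first by rewrite subr_eq0 eq_sym.
  by rewrite addr_eq0.
have e4 : t - 1 != 0 by rewrite subr_eq0.
by rewrite !mulf_neq0 ?expf_neq0 ?pnatr_eq0.
Qed.


Lemma homog_msize5 {P : {mpoly R[4]}} : P \is 4.-homog -> (msize P <= 5)%N.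
Proof.
move/dhomogP => h; rewrite msizeE big_seq; apply: (big_ind (fun x => x <= 5)%N) => //.
- by move=> x y hx hy; rewrite geq_max hx hy.
by move=> m /h ->.
Qed.

Lemma msize_toC (P : {mpoly R[4]}) : msize (toC P) = msize P.
Proof. by rewrite !msizeE (perm_big _ (msupp_map_mpoly _ (@complexI R))). Qed.

Lemma lineK_map (P : {mpoly R[4]}) (pc vc : 'I_4 -> complex R) (p v : 'I_4 -> R) :
  (forall i, pc i = (p i)%:C) -> (forall i, vc i = (v i)%:C) ->
  lineK (toC P) pc vc = map_poly (real_complex R) (lineK P p v).
Proof.
move=> hp hv; rewrite !lineKE meval_rmorph.
have -> : map_mpoly (map_poly (real_complex R)) (map_mpoly (@polyC R) P) =
    map_mpoly (@polyC _) (toC P).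
  by apply/mpolyP => m; rewrite !mcoeff_map_mpoly /= map_polyC.
apply: meval_eq => i /=; rewrite hp hv rmorphD /= map_polyC map_polyZ map_polyX.
done.
Qed.

Lemma L_gen t u (p q : 'I_4 -> R) a b c d a' b' c' d' :
  (msize (gform t u) <= 5)%N -> p =1 X4 a b c d -> q =1 X4 a' b' c' d' ->
  (forall s, gv t u (a + s * (a' - a)) (b + s * (b' - b)) (c + s * (c' - c)) (d + s * (d' - d))
     = cL t u * (s ^+ 2 * (s - 1) ^+ 2)) ->
  lineK (gform t u) p (fun i => q i - p i) = cL t u *: ('X^2 * ('X - 1) ^+ 2).
Proof.
move=> hs hp hq hid; apply: interp => //.
- rewrite (leq_trans (size_scale_leq _ _)) // (leq_trans (size_polyMleq _ _)) //.
  by rewrite size_polyXn -polyC1 size_exp_XsubC.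
move=> s.
have hv : (fun i => q i - p i) =1 X4 (a' - a) (b' - b) (c' - c) (d' - d).
  by move=> i; rewrite hp hq; case: i => [[|[|[|[|k]]]] hk].
by rewrite (@X4eval _ _ _ a b c d _ _ _ _ s hp hv) gE hid !hornerE.
Qed.

Lemma L12' t u s : u != 0 ->
  gv t u (1 + s * (1 - 1)) (1 + s * (u - 1)) (u + s * (1 - u)) (u + s * (u - u))
  = cL t u * (s ^+ 2 * (s - 1) ^+ 2).
Proof. move=> u0; rewrite /gv /cL /pG0 /pG1 /pG2 /pG3 /pG4 /omega; by field. Qed.
Lemma L13' t u s : u != 0 ->
  gv t u (1 + s * (1 - 1)) (1 + s * (u - 1)) (u + s * (u - u)) (u + s * (1 - u))
  = cL t u * (s ^+ 2 * (s - 1) ^+ 2).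
Proof. move=> u0; rewrite /gv /cL /pG0 /pG1 /pG2 /pG3 /pG4 /omega; by field. Qed.
Lemma L23' t u s : u != 0 ->
  gv t u (1 + s * (1 - 1)) (u + s * (u - u)) (1 + s * (u - 1)) (u + s * (1 - u))
  = cL t u * (s ^+ 2 * (s - 1) ^+ 2).
Proof. move=> u0; rewrite /gv /cL /pG0 /pG1 /pG2 /pG3 /pG4 /omega; by field. Qed.

Lemma cL_neq0 t u : u != 0 -> u != 1 -> 0 < VFw t u -> cL t u != 0.
Proof.
move=> u0 u1 hV; rewrite /cL.
have e : 2%:R * (t + 1) * omega u - (t - 1) ^+ 2 != 0.
  apply/eqP => e.
  have : VFw t u = - ((omega u * (t + 3%:R)) ^+ 2).
    have e' : (t - 1) ^+ 2 = 2%:R * (t + 1) * omega u.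
      by apply/eqP; rewrite eq_sym -subr_eq0 e.
    by rewrite /VFw /VF e'; ring.
  have := sqr_ge0 (omega u * (t + 3%:R)); lra.
by rewrite !mulf_neq0 ?expf_neq0 ?pnatr_eq0 // subr_eq0.
Qed.

Ltac v4 := case=> [[|[|[|[|k]]]] hk] //; rewrite /X4 /=; ring.


Lemma sos_part t u : t != 1 -> u != 0 -> u != 1 -> u != -1 -> 0 < VFw t u ->
  extremalP44 (gform t u) -> ~ Sigma44 (gform t u).
Proof.
move=> t1 u0 u1 um1 hV [[hom nonneg] f0 ext] [qs [hq E]].
have hs := homog_msize5 hom.
have [q qin q0] : exists2 q, q \in qs & q != 0.
  case: (boolP (has (fun q => q != 0) qs)) => [/hasP [q ? ?]|/hasPn h]; first by exists q.
  exfalso; move/eqP: f0; apply; rewrite E big_seq big1 // => q /h; rewrite negbK => /eqP ->.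
  by rewrite expr2 mul0r.
have E2 : gform t u = q ^+ 2 + \sum_(r <- rem q qs) r ^+ 2.
  by rewrite E (perm_big _ (perm_to_rem qin)) big_cons.
have Pq : P44 (q ^+ 2).
  split; first exact: (dhomogMn 2 (allP hq q qin)).
  by move=> x; rewrite expr2 mevalM -expr2 sqr_ge0.
have Pr : P44 (\sum_(r <- rem q qs) r ^+ 2).
  split.
    rewrite big_seq; apply: rpred_sum => r rin.
    exact: (dhomogMn 2 (allP hq r (mem_rem rin))).
  move=> x; rewrite raddf_sum /=; apply: sumr_ge0 => r _.
  by rewrite expr2 mevalM -expr2 sqr_ge0.
have [[l l0 hl] _] := ext _ _ Pq Pr E2.
have ln0 : l != 0.
  apply/eqP => l00; move/eqP: q0; apply; move: hl; rewrite l00 scale0r => /eqP.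
  by rewrite expf_eq0 /= => /eqP.
have fGH : gform t u = (l^-1 *: q) * q.
  by rewrite -scalerAl -expr2 hl scalerA mulVf // scale1r.
have qp : q.@[X4 1 1 u u] = 0.
  have : (q ^+ 2).@[X4 1 1 u u] = 0 by rewrite hl mevalZ gE zero_p1 // mulr0.
  by rewrite expr2 mevalM => /eqP; rewrite mulf_eq0 orbb => /eqP.
apply: (@caseB _ (l^-1 *: q) q (X4 1 1 u u) (X4 1 (-1) 0 0) (X4 0 0 1 (-1)) (X4 1 1 0 0)
   (Qf t u 1 (-1) 0 0) (Qf t u 0 0 1 (-1)) (Qf t u 1 1 0 0)).
- by rewrite pnatr_eq0.
- by rewrite mevalZ qp mulr0.
- exact: qp.
- exact: QQ_neq0.
- by rewrite -fGH; apply: line_hess.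
- by rewrite -fGH; apply: line_hess.
- by rewrite -fGH; apply: line_hess.
- by rewrite -fGH -Q12E //; apply: line_hess => //; v4.
- by rewrite -fGH -Q13E //; apply: line_hess => //; v4.
- by rewrite -fGH -Q23E //; apply: line_hess => //; v4.
Qed.


Definition XC (a b c d : R) : 'I_4 -> complex R := fun i => (X4 a b c d i)%:C.

Lemma unit_msize1 (G : {mpoly (complex R)[4]}) : G \is a GRing.unit -> (msize G <= 1)%N.
Proof.
case/unitrP => y [yG _].
have G0 : G != 0 by apply/eqP => h; move: yG; rewrite h mulr0 => /eqP; rewrite eq_sym oner_eq0.
have y0 : y != 0 by apply/eqP => h; move: yG; rewrite h mul0r => /eqP; rewrite eq_sym oner_eq0.
have := congr1 (fun P : {mpoly (complex R)[4]} => msize P) yG; rewrite msizeM // msize1 (mpolySpred _ y0).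
rewrite addSn /=; move: (mmeasure mdeg G) => m; move: (_.-1) => k h; lia.
Qed.

Lemma targ_size {c : complex R} : c != 0 -> size (c *: ('X^2 * ('X - 1) ^+ 2) : {poly complex R}) = 5%N.
Proof.
move=> c0.
have h1 : ('X^2 : {poly complex R}) != 0 by rewrite -size_poly_eq0 size_polyXn.
have h2 : (('X - 1) ^+ 2 : {poly complex R}) != 0 by rewrite expf_neq0 // -polyC1 polyXsubC_eq0.
by rewrite size_scale // size_mul // size_polyXn -polyC1 size_exp_XsubC.
Qed.

Lemma lineC_pair t u (a b c d a' b' c' d' : R) :
  (msize (gform t u) <= 5)%N ->
  (forall s, gv t u (a + s * (a' - a)) (b + s * (b' - b)) (c + s * (c' - c)) (d + s * (d' - d))
     = cL t u * (s ^+ 2 * (s - 1) ^+ 2)) ->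
  lineK (toC (gform t u)) (XC a b c d) (fun i => XC a' b' c' d' i - XC a b c d i)
    = (cL t u)%:C *: ('X^2 * ('X - 1) ^+ 2).
Proof.
move=> hs hid.
rewrite (@lineK_map _ _ _ (X4 a b c d) (fun i => X4 a' b' c' d' i - X4 a b c d i)) //; last first.
  by move=> i; rewrite /XC rmorphB.
rewrite (@L_gen t u _ _ a b c d a' b' c' d' hs (frefl _) (frefl _) hid).
rewrite map_polyZ; congr (_ *: _); by rewrite rmorphM /= !rmorphXn /= rmorphB /= map_polyX rmorph1.
Qed.

Lemma irr_part t u : t != 1 -> u != 0 -> u != 1 -> u != -1 -> 0 < VFw t u ->
  extremalP44 (gform t u) -> mpoly_irreducible (toC (gform t u)).
Proof.
move=> t1 u0 u1 um1 hV [[hom _] _ _].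
have hs := homog_msize5 hom.
have cC : (cL t u)%:C != 0 by rewrite fmorph_eq0 cL_neq0.
have l12 := lineC_pair t u 1 1 u u 1 u 1 u hs (fun s => L12' t u s u0).
have l13 := lineC_pair t u 1 1 u u 1 u u 1 hs (fun s => L13' t u s u0).
have l23 := lineC_pair t u 1 u 1 u 1 u u 1 hs (fun s => L23' t u s u0).
have hsC : (msize (toC (gform t u)) <= 5)%N by rewrite msize_toC.
have f0 : toC (gform t u) != 0.
  apply/eqP => h0; move: (targ_size cC); rewrite -l12 h0 -mpolyC0 lineC polyC0 size_poly0.
  done.
split => //.
- apply/negP => /unit_msize1 h1.
  have := line_size _ (toC (gform t u)) (XC 1 1 u u) (fun i => XC 1 u 1 u i - XC 1 1 u u i).
  by rewrite l12 targ_size // => h2; move: (leq_trans h2 h1).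
move=> G H E.
case: (boolP (G \is a GRing.unit)) => [|gu]; first by left.
case: (boolP (H \is a GRing.unit)) => [|hu]; first by right.
exfalso.
have hv : forall a b c d a' b' c' d' i,
    XC a b c d i + XC a' b' c' d' i = (X4 (a + a') (b + b') (c + c') (d + d') i)%:C.
  move=> a b c d a' b' c' d' i; rewrite /XC -rmorphD; congr (_%:C).
  by case: i => [[|[|[|[|k]]]] hk].
apply: (@no_factor _ G H (XC 1 1 u u) (XC 1 u 1 u) (XC 1 u u 1)
          (cL t u)%:C (cL t u)%:C (cL t u)%:C).
- by rewrite -E.
- by rewrite -E.
- exact: gu.
- exact: hu.
- rewrite /alpha; have [g0|//] := eqVneq G.@[XC 1 1 u u] 0.
  have [h0|//] := eqVneq H.@[XC 1 1 u u] 0; exfalso.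
  apply: (@caseB _ G H (XC 1 1 u u) (XC 1 (-1) 0 0) (XC 0 0 1 (-1)) (XC 1 1 0 0)
     (Qf t u 1 (-1) 0 0)%:C (Qf t u 0 0 1 (-1))%:C (Qf t u 1 1 0 0)%:C).
  + by rewrite pnatr_eq0.
  + exact: g0.
  + exact: h0.
  + by rewrite -!rmorphM fmorph_eq0 QQ_neq0.
  + by rewrite -E (@lineK_map _ _ _ (X4 1 1 u u) (X4 1 (-1) 0 0)) // coef_map
      (@line_hess t u _ 1 (-1) 0 0 u0 hs (frefl _)).
  + by rewrite -E (@lineK_map _ _ _ (X4 1 1 u u) (X4 0 0 1 (-1))) // coef_map
      (@line_hess t u _ 0 0 1 (-1) u0 hs (frefl _)).
  + by rewrite -E (@lineK_map _ _ _ (X4 1 1 u u) (X4 1 1 0 0)) // coef_map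
      (@line_hess t u _ 1 1 0 0 u0 hs (frefl _)).
  + rewrite -E (@lineK_map _ _ _ (X4 1 1 u u) (X4 1 (-1) 1 (-1))) //; last first.
      by move=> i; rewrite /XC -rmorphD; congr (_%:C); move: i; v4.
    by rewrite coef_map (@line_hess t u _ 1 (-1) 1 (-1) u0 hs (frefl _)) Q12E // -rmorphD.
  + rewrite -E (@lineK_map _ _ _ (X4 1 1 u u) (X4 2%:R 0 0 0)) //; last first.
      by move=> i; rewrite /XC -rmorphD; congr (_%:C); move: i; v4.
    by rewrite coef_map (@line_hess t u _ 2%:R 0 0 0 u0 hs (frefl _)) Q13E // -rmorphD.
  + rewrite -E (@lineK_map _ _ _ (X4 1 1 u u) (X4 1 1 1 (-1))) //; last first.
      by move=> i; rewrite /XC -rmorphD; congr (_%:C); move: i; v4.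
    by rewrite coef_map (@line_hess t u _ 1 1 1 (-1) u0 hs (frefl _)) Q23E // -rmorphD.
- exact: cC.
- by rewrite -E.
- exact: cC.
- by rewrite -E.
- exact: cC.
- by rewrite -E.
Qed.

End Conc.

Theorem theorem2p6 (R : realType) (t u : R) :
  t != 1 -> u != 0 -> u != 1 -> u != -1 ->
  0 < VF t (omega u) ->
  extremalP44 (gform t u) ->
  mpoly_irreducible (toC (gform t u)) /\ ~ Sigma44 (gform t u).
Proof.
move=> t1 u0 u1 um1 hV ext; split.
- exact: irr_part.
- exact: sos_part.
Qed.
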